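(* Let $H$ be a traceless hermitian $4\times 4$ matrix with pairwise distinct eigenvalues $\lambda_1,\dots,\lambda_4$, let $C(z)=\prod_{k=1}^4(z-\lambda_k)$, and let $F_4(t)=\sum_{k=1}^4 \exp(i\lambda_k t)/C'(\lambda_k)$. Then for all real $t$, $$\exp(itH)=\left[H^3-iH^2\frac{d}{dt}-H\left(\tfrac12\operatorname{tr}(H^2)+\frac{d^2}{dt^2}\right)+I\left(-\tfrac13\operatorname{tr}(H^3)+\tfrac12 i\operatorname{tr}(H^2)\frac{d}{dt}+i\frac{d^3}{dt^3}\right)\right]F_4(t).$$
   Context: $I$ is the $4\times4$ identity matrix; a matrix coefficient multiplying a differential operator means the operator is applied to $F_4(t)$ and the result multiplies the matrix. *)

(* Defs.v *)
From HB Require Import structures.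
From mathcomp Require Import all_boot all_order all_algebra.
From mathcomp Require Import all_classical all_reals all_analysis.
From mathcomp Require Import complex.
Set Implicit Arguments. Unset Strict Implicit. Unset Printing Implicit Defensive.
Import Order.TTheory GRing.Theory Num.Theory numFieldNormedType.Exports.
Local Open Scope ring_scope.
Local Open Scope complex_scope.

Section Defs.
Variable R : realType.

Definition csum_to (a : nat -> R[i]) (l : R[i]) : Prop :=
  (series (fun n => complex.Re (a n)) @ \oo --> complex.Re l)%classic /\
  (series (fun n => complex.Im (a n)) @ \oo --> complex.Im l)%classic.

Definition is_mexp (n : nat) (A E : 'M[R[i]]_n) : Prop :=
  forall i j, csum_to (fun k => (A ^+ k) i j / (k`!)%:R) (E i j).

Definition cexp (z : R[i]) : R[i] :=
  (expR (complex.Re z))%:C * ((cos (complex.Im z)) +i* (sin (complex.Im z))).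

Definition cderive_n (n : nat) (F : R -> R[i]) : R -> R[i] :=
  fun t => (derive1n n (fun s => complex.Re (F s)) t) +i*
           (derive1n n (fun s => complex.Im (F s)) t).

Definition hermitian_mx (n : nat) (H : 'M[R[i]]_n) : Prop :=
  forall i j, H j i = (H i j)^*.

Definition Cpoly (lam : 'I_4 -> R[i]) : {poly R[i]} :=
  \prod_(k < 4) ('X - (lam k)%:P).

Definition F4 (lam : 'I_4 -> R[i]) (t : R) : R[i] :=
  \sum_(k < 4) cexp ('i * lam k * t%:C) / ((Cpoly lam)^`()).[lam k].

End Defs.

(* Main.v *)
Require Import Defs.
From HB Require Import structures.
From mathcomp Require Import all_boot all_order all_algebra.
From mathcomp Require Import all_classical all_reals all_analysis.
From mathcomp Require Import complex ring lra.
Import Order.TTheory GRing.Theory Num.Theory numFieldNormedType.Exports.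
Local Open Scope ring_scope.
Local Open Scope complex_scope.
Local Notation Re := complex.Re.
Local Notation Im := complex.Im.
Section Trig1.
Variable R : realType.
Lemma ReM (x y : R[i]) : Re (x * y) = Re x * Re y - Im x * Im y. Proof. by case: x; case: y. Qed.
Lemma ImM (x y : R[i]) : Im (x * y) = Re x * Im y + Im x * Re y. Proof. case: x => a b; case: y => c d /=; ring. Qed.
Lemma ReMr (z : R[i]) r : Re (z * r%:C) = Re z * r. Proof. by rewrite ReM /= mulr0 subr0. Qed.
Lemma ImMr (z : R[i]) r : Im (z * r%:C) = Im z * r. Proof. by rewrite ImM /= mulr0 add0r. Qed.
Lemma natC n : (n%:R : R[i]) = (n%:R : R)%:C. Proof. by rewrite rmorph_nat. Qed.
Lemma iX k : ('i : R[i])^+k = ((~~ odd k)%:R * (-1)^+k./2) +i* ((odd k)%:R * (-1)^+k.-1./2).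
Proof.
have E2 m : ('i:R[i])^+(m.*2) = ((-1)^+m)%:C.
  by rewrite -muln2 mulnC exprM sqr_i rmorphXn rmorphN1.
have E := odd_double_half k.
case h: (odd k); rewrite h in E.
- have Hk : k.-1 = k./2.*2 by rewrite -[in LHS]E.
  rewrite Hk doubleK -[in LHS]E exprD E2 expr1.
  by apply/eqP; rewrite eq_complex ReM ImM /=; apply/andP; split; apply/eqP; ring.
- rewrite -[in LHS]E add0n E2.
  by apply/eqP; rewrite eq_complex /=; apply/andP; split; apply/eqP; ring.
Qed.
Lemma iXdiv (x : R) k : ('i * x%:C)^+k / k`!%:R = cos_coeff x k +i* sin_coeff x k.
Proof.
rewrite exprMn -rmorphXn iX (natC k`!) -fmorphV -mulrA -rmorphM.
apply/eqP; rewrite eq_complex ReMr ImMr /= /cos_coeff /sin_coeff /=.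
by rewrite -exprnP !mulrA !eqxx.
Qed.
End Trig1.
Section Trig2.
Variable R : realType.
Lemma cos_series (x : R) : (series (cos_coeff x) @ \oo --> cos x)%classic.
Proof. rewrite unlock. exact: is_cvg_series_cos_coeff. Qed.
Lemma sin_series (x : R) : (series (sin_coeff x) @ \oo --> sin x)%classic.
Proof. rewrite unlock. exact: is_cvg_series_sin_coeff. Qed.
Lemma ReD (x y : R[i]) : Re (x + y) = Re x + Re y. Proof. by case: x; case: y. Qed.
Lemma ImD (x y : R[i]) : Im (x + y) = Im x + Im y. Proof. by case: x; case: y. Qed.

Lemma csumD (a b : nat -> R[i]) A B : csum_to a A -> csum_to b B ->
  csum_to (fun k => a k + b k) (A + B).
Proof.
move=> [ha1 ha2] [hb1 hb2]; split.
- have -> : series (fun n => Re (a n + b n)) = series (fun n => Re (a n)) + series (fun n => Re (b n)).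
    by rewrite -seriesD; congr series; apply/funext => k; rewrite /= ReD.
  by rewrite ReD; apply: cvgD.
- have -> : series (fun n => Im (a n + b n)) = series (fun n => Im (a n)) + series (fun n => Im (b n)).
    by rewrite -seriesD; congr series; apply/funext => k; rewrite /= ImD.
  by rewrite ImD; apply: cvgD.
Qed.

Lemma csum0 : csum_to (fun _ => 0 : R[i]) 0.
Proof.
have E : forall f : nat -> R, (forall n, f n = 0) -> series f = fun _ => 0.
  by move=> f h; apply/funext=> n; rewrite /series /= big1.
by split; rewrite E //; exact: cvg_cst.
Qed.

Lemma csum_term (w : R[i]) (x : R) :
  csum_to (fun k => w * (cos_coeff x k +i* sin_coeff x k)) (w * (cos x +i* sin x)).
Proof.
split.
- have -> : series (fun n => Re (w * (cos_coeff x n +i* sin_coeff x n))) =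
     (fun n => Re w * series (cos_coeff x) n) - (fun n => Im w * series (sin_coeff x) n).
    apply/funext => n; rewrite /series /= !fctE !mulr_sumr -sumrB.
    by apply: eq_bigr => i _; rewrite ReM.
  rewrite ReM /=; apply: cvgB; apply: cvgMr; [exact: cos_series | exact: sin_series].
- have -> : series (fun n => Im (w * (cos_coeff x n +i* sin_coeff x n))) =
     (fun n => Re w * series (sin_coeff x) n) + (fun n => Im w * series (cos_coeff x) n).
    apply/funext => n; rewrite /series /= !fctE !mulr_sumr -big_split.
    by apply: eq_bigr => i _; rewrite ImM.
  rewrite ImM /=; apply: cvgD; apply: cvgMr; [exact: sin_series | exact: cos_series].
Qed.

Lemma csum_sum n (w : 'I_n -> R[i]) (x : 'I_n -> R) :
  csum_to (fun k => \sum_(m < n) w m * (cos_coeff (x m) k +i* sin_coeff (x m) k))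
          (\sum_(m < n) w m * (cos (x m) +i* sin (x m))).
Proof.
elim: n w x => [|n IH] w x.
  rewrite big_ord0; have -> : (fun k => \sum_(m < 0) w m * (cos_coeff (x m) k +i* sin_coeff (x m) k)) = fun _ => 0.
    by apply/funext => k; rewrite big_ord0.
  exact: csum0.
have -> : (fun k => \sum_(m < n.+1) w m * (cos_coeff (x m) k +i* sin_coeff (x m) k)) =
  fun k => \sum_(m < n) w (widen_ord (leqnSn n) m) * (cos_coeff (x (widen_ord (leqnSn n) m)) k +i* sin_coeff (x (widen_ord (leqnSn n) m)) k) + w ord_max * (cos_coeff (x ord_max) k +i* sin_coeff (x ord_max) k).
  by apply/funext => k; rewrite big_ord_recr.
rewrite big_ord_recr /=; apply: csumD; [exact: IH | exact: csum_term].
Qed.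
End Trig2.
Section Trig3.
Variable R : realType.
Lemma dlin (m s : R) : is_derive s 1 (fun s => m * s) m.
Proof. 
have := is_deriveZ m (@is_derive_id _ R s 1). by rewrite /GRing.scale /= mulr1.
Qed.
Global Instance dcos (m s : R) : is_derive s 1 (fun s => cos (m * s)) (- sin (m * s) * m).
Proof. exact: (is_derive1_comp (f:=cos) (g:=fun s => m * s) _ (dlin m s)). Qed.
Global Instance dsin (m s : R) : is_derive s 1 (fun s => sin (m * s)) (cos (m * s) * m).
Proof. exact: (is_derive1_comp (f:=sin) (g:=fun s => m * s) _ (dlin m s)). Qed.

Lemma sc (a b : R) : a *: b = a * b. Proof. by []. Qed.
Definition ee (m s : R) : R[i] := cos (m * s) +i* sin (m * s).

Lemma dRe (w : R[i]) (m s : R) :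
  is_derive s 1 (fun s => Re (w * ee m s)) (Re (w * ('i * m%:C) * ee m s)).
Proof.
rewrite (_ : (fun s => Re (w * ee m s)) = (Re w *: (fun s => cos (m*s))) - (Im w *: (fun s => sin (m*s)))); last first.
  by apply/funext => x; rewrite /= ReM.
apply: is_derive_eq.
rewrite !ReM !ImM /=. rewrite 2!sc; ring.
Qed.
Lemma dIm (w : R[i]) (m s : R) :
  is_derive s 1 (fun s => Im (w * ee m s)) (Im (w * ('i * m%:C) * ee m s)).
Proof.
rewrite (_ : (fun s => Im (w * ee m s)) = (Re w *: (fun s => sin (m*s))) + (Im w *: (fun s => cos (m*s)))); last first.
  by apply/funext => x; rewrite /= ImM.
apply: is_derive_eq.
rewrite !ImM !ReM /= 2!sc; ring.
Qed.
Lemma ReSum n (f : 'I_n -> R[i]) : Re (\sum_(k < n) f k) = \sum_(k < n) Re (f k).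
Proof. by elim/big_ind2: _ => // a [? ?] b [? ?] <- <-. Qed.
Lemma ImSum n (f : 'I_n -> R[i]) : Im (\sum_(k < n) f k) = \sum_(k < n) Im (f k).
Proof. by elim/big_ind2: _ => // a [? ?] b [? ?] <- <-. Qed.

Lemma dReSum n (w : 'I_n -> R[i]) (m : 'I_n -> R) (s : R) :
  is_derive s 1 (fun s => Re (\sum_(k < n) w k * ee (m k) s))
    (Re (\sum_(k < n) w k * ('i * (m k)%:C) * ee (m k) s)).
Proof.
rewrite (_ : (fun s => _) = \sum_(k < n) (fun s => Re (w k * ee (m k) s))); last first.
  by apply/funext => x; rewrite ReSum fct_sumE.
rewrite ReSum; apply: is_derive_sum => k; exact: dRe.
Qed.
Lemma dImSum n (w : 'I_n -> R[i]) (m : 'I_n -> R) (s : R) :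
  is_derive s 1 (fun s => Im (\sum_(k < n) w k * ee (m k) s))
    (Im (\sum_(k < n) w k * ('i * (m k)%:C) * ee (m k) s)).
Proof.
rewrite (_ : (fun s => _) = \sum_(k < n) (fun s => Im (w k * ee (m k) s))); last first.
  by apply/funext => x; rewrite ImSum fct_sumE.
rewrite ImSum; apply: is_derive_sum => k; exact: dIm.
Qed.

Lemma derivn_sum n (w : 'I_n -> R[i]) (m : 'I_n -> R) j :
  derive1n j (fun s => Re (\sum_(k < n) w k * ee (m k) s)) =
    (fun s => Re (\sum_(k < n) (w k * ('i * (m k)%:C) ^+ j) * ee (m k) s)) /\
  derive1n j (fun s => Im (\sum_(k < n) w k * ee (m k) s)) =
    (fun s => Im (\sum_(k < n) (w k * ('i * (m k)%:C) ^+ j) * ee (m k) s)).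
Proof.
elim: j => [|j [IH1 IH2]].
  by split; apply/funext => s; rewrite derive1n0; f_equal; apply: eq_bigr => k _; rewrite expr0 mulr1.
rewrite !derive1nS IH1 IH2; split; apply/funext => s; rewrite derive1E.
- have [_ ->] := @dReSum n (fun k => w k * ('i * (m k)%:C) ^+ j) m s; f_equal; apply: eq_bigr => k _; idtac. by rewrite exprSr !mulrA.
- have [_ ->] := @dImSum n (fun k => w k * ('i * (m k)%:C) ^+ j) m s; f_equal; apply: eq_bigr => k _; idtac. by rewrite exprSr !mulrA.
Qed.
End Trig3.
Section Poly.
Variable R : realType.
Local Notation F := R[i].
Lemma two_neq0 : (2%:R : F) != 0. Proof. by rewrite pnatr_eq0. Qed.
Lemma three_neq0 : (3%:R : F) != 0. Proof. by rewrite pnatr_eq0. Qed.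
Lemma ifree (l c : 'I_4 -> F) (z : F) : \sum_m l m = 0 ->
  let P n := \sum_m c m * l m ^+ n in
  let s2 := \sum_m l m ^+ 2 in let s3 := \sum_m l m ^+ 3 in
  P 0%N * z ^+ 3 + P 1%N * z ^+ 2 - (s2 / 2%:R * P 0%N - P 2%N) * z
   + (- (s3 / 3%:R) * P 0%N - s2 / 2%:R * P 1%N + P 3%N)
  = \sum_m c m * \prod_(j < 4 | j != m) (z - l j).
Proof.
move=> hs P s2 s3; rewrite /P /s2 /s3.
rewrite !big_ord_recl !big_ord0 in hs *.
rewrite !(big_mkcond (fun j => j != _)) /=.
rewrite !big_ord_recl !big_ord0 /=.
set a := l ord0 in hs *; set b := l (lift ord0 ord0) in hs *.
set cc := l (lift ord0 (lift ord0 ord0)) in hs *.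
set d := l (lift ord0 (lift ord0 (lift ord0 ord0))) in hs *.
have hd : d = -(a+b+cc) by apply: (addrI (a+b+cc)); rewrite addrN -hs; ring.
rewrite hd.
by field.
Qed.

Lemma scal (l c : 'I_4 -> F) k : \sum_m l m = 0 ->
  let D n := \sum_m c m * ('i * l m) ^+ n in
  let s2 := \sum_m l m ^+ 2 in let s3 := \sum_m l m ^+ 3 in
  D 0%N * l k ^+ 3 - ('i * D 1%N) * l k ^+ 2 - (s2 / 2%:R * D 0%N + D 2%N) * l k
   + (- (s3 / 3%:R) * D 0%N + 'i * (s2 / 2%:R) * D 1%N + 'i * D 3%N)
  = c k * \prod_(j < 4 | j != k) (l k - l j).
Proof.
move=> hs D s2 s3.
pose P n := \sum_m c m * l m ^+ n.
have DP n : D n = 'i ^+ n * P n.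
  rewrite /D /P mulr_sumr; apply: eq_bigr => m _; rewrite exprMn; ring.
have := ifree l c (l k) hs; rewrite -/P -/s2 -/s3 => E.
have Es : \sum_m c m * \prod_(j < 4 | j != m) (l k - l j) = c k * \prod_(j < 4 | j != k) (l k - l j).
  pose f m := c m * \prod_(j < 4 | j != m) (l k - l j).
  rewrite -/(f k) (eq_bigr f) // (bigD1 k) //= big1 ?addr0 // => m mk; rewrite /f.
  by rewrite (bigD1 k) 1?eq_sym //= subrr mul0r mulr0.
rewrite Es in E; rewrite -E !DP.
have ii : 'i * 'i = -1 :> F by rewrite -expr2 sqr_i.
have -> : ('i : F) ^+ 3 = - 'i by rewrite exprS sqr_i mulrN1.
rewrite expr1 expr0 sqr_i.
have E2 : forall x y K : F, x - y = ('i * 'i + 1) * K -> x = y.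
  by move=> x y K; rewrite ii addNr mul0r => /eqP; rewrite subr_eq0 => /eqP.
apply: (E2 _ _ (- P 1%N * l k ^+ 2 + s2 / 2%:R * P 1%N - P 3%N)).
ring.
Qed.


End Poly.
Section Alg.
Variable R : realType.
Local Notation F := R[i].
Variables (H : 'M[F]_4) (lam : 'I_4 -> F).
Hypothesis hlam : char_poly H = Cpoly lam.
Hypothesis hdist : injective lam.

Definition dd k := \prod_(j < 4 | j != k) (lam k - lam j).

Lemma dd_neq0 k : dd k != 0.
Proof.
apply/prodf_neq0 => j jk; rewrite subr_eq0; apply/eqP => /hdist E.
by rewrite E eqxx in jk.
Qed.

Lemma Cpoly_deriv k : (Cpoly lam)^`().[lam k] = dd k.
Proof.
rewrite /Cpoly (bigD1 k) //= derivM derivXsubC mul1r hornerD hornerM hornerXsubC subrr mul0r addr0 horner_prod.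
by apply: eq_bigr => j _; rewrite hornerXsubC.
Qed.

Lemma root_lam k : root (char_poly H) (lam k).
Proof. by rewrite hlam /root /Cpoly horner_prod (bigD1 k) //= hornerXsubC subrr mul0r. Qed.

Definition v k : 'rV[F]_4 := nz_row (eigenspace H (lam k)).
Lemma vH k : v k *m H = lam k *: v k.
Proof. apply/eigenspaceP; exact: nz_row_sub. Qed.
Lemma v_neq0 k : v k != 0.
Proof. rewrite nz_row_eq0; have := root_lam k; by rewrite -eigenvalue_root_char. Qed.

Lemma vX k n : v k *m H ^+ n = lam k ^+ n *: v k.
Proof.
elim: n => [|n IH]; first by rewrite expr0 scale1r mulmx1.
by rewrite exprSr -mulmxE mulmxA IH -scalemxAl vH scalerA -exprSr.
Qed.

Lemma vprod k (r : seq 'I_4) (P : pred 'I_4) :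
  v k *m \prod_(j <- r | P j) (H - (lam j)%:M) = (\prod_(j <- r | P j) (lam k - lam j)) *: v k.
Proof.
elim: r => [|j r IH]; first by rewrite !big_nil mulmx1 scale1r.
rewrite !big_cons; case: (P j) => //.
by rewrite -mulmxE mulmxA mulmxBr vH mul_mx_scalar -scalerBl -scalemxAl IH scalerA.
Qed.

Definition V : 'M[F]_4 := \matrix_(k < 4) v k.

Lemma V_unit : V \in unitmx.
Proof.
rewrite -row_free_unit -kermx_eq0; apply/negPn/negP => nz.
set w := nz_row (kermx V).
have w0 : w != 0 by rewrite nz_row_eq0.
have wV : w *m V = 0 by apply/sub_kermxP; exact: nz_row_sub.
have wm : forall m, w 0 m = 0.
  move=> m.
  set P := \prod_(j < 4 | j != m) (H - (lam j)%:M).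
  have := congr1 (fun x => x *m P) wV.
  rewrite /= mul0mx (mulmx_sum_row w V) mulmx_suml (bigD1 m) //= big1 ?addr0.
  - rewrite rowK -scalemxAl /P vprod scalerA => /eqP; rewrite scaler_eq0 (negbTE (v_neq0 m)) orbF.
    by rewrite mulf_eq0 (negbTE (dd_neq0 m)) orbF => /eqP.
  - move=> k km; rewrite rowK -scalemxAl /P vprod (bigD1 k km) /= subrr mul0r scale0r.
    by rewrite scaler0.
by move/negP: w0; apply; apply/eqP/rowP => m; rewrite wm mxE.
Qed.

Lemma diagonalize (M : 'M[F]_4) (c : 'I_4 -> F) : (forall k, v k *m M = c k *: v k) ->
  M = invmx V *m diag_mx (\row_k c k) *m V.
Proof.
move=> hc.
have E : V *m M = diag_mx (\row_k c k) *m V.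
  apply/row_matrixP => k; rewrite row_mul rowK hc row_mul row_diag_mx mxE -scalemxAl.
  by rewrite -rowE rowK.
by rewrite -mulmxA -E mulmxA mulVmx ?mul1mx // V_unit.
Qed.

Lemma conj_entry (c : 'I_4 -> F) i j :
  (invmx V *m diag_mx (\row_k c k) *m V) i j = \sum_m (invmx V i m * V m j) * c m.
Proof. rewrite mxE; apply: eq_bigr => m _; rewrite mul_mx_diag !mxE; ring. Qed.

Lemma trX n : \tr (H ^+ n) = \sum_k lam k ^+ n.
Proof.
rewrite (@diagonalize (H ^+ n) (fun k => lam k ^+ n) (vX^~ n)) mxtrace_mulC mulmxA mulmxV ?V_unit // mul1mx mxtrace_diag.
by apply: eq_bigr => k _; rewrite mxE.
Qed.

Lemma real_eig (hH : hermitian_mx H) (a : F) (x : 'rV[F]_4) :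
  x *m H = a *: x -> x != 0 -> a = (Re a)%:C.
Proof.
move=> xH x0.
pose N := \sum_i x 0 i * (x 0 i)^*.
pose q := \sum_j \sum_i x 0 i * H i j * (x 0 j)^*.
have qN : q = a * N.
  rewrite /q /N mulr_sumr; apply: eq_bigr => j _.
  move/rowP: (xH) => /(_ j); rewrite !mxE => E.
  by rewrite -mulr_suml E mulrA.
have qc : q^* = q.
  rewrite /q rmorph_sum /= exchange_big /=; apply: eq_bigr => j _.
  rewrite rmorph_sum /=; apply: eq_bigr => i _.
  by rewrite !rmorphM /= conjcK -hH; ring.
have Nc : N^* = N.
  by rewrite /N rmorph_sum /=; apply: eq_bigr => i _; rewrite rmorphM /= conjcK mulrC.
have N0 : N != 0.
  apply/negP; rewrite psumr_eq0; last by move=> i _; exact: mulcJ_ge0.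
  move/allP => h; move/negP: x0; apply; apply/eqP/rowP => i.
  have := h i (mem_index_enum i); rewrite /= mulf_eq0 conjc_eq0 orbb => /eqP ->.
  by rewrite mxE.
have aa : a^* = a.
  apply: (mulIf N0); rewrite -qN -qc qN rmorphM /= Nc //.
clear -aa; move: aa; case: a => b c /= [] hc.
by congr (_ +i* _); lra.
Qed.

Lemma vpoly k (a b c d : F) :
  v k *m (a *: H ^+ 3 - b *: H ^+ 2 - c *: H + d *: 1%:M) =
  (a * lam k ^+ 3 - b * lam k ^+ 2 - c * lam k + d) *: v k.
Proof.
rewrite !mulmxDr !mulmxN -!scalemxAr !vX vH mulmx1 !scalerA.
by rewrite !scalerDl !scaleNr.
Qed.

End Alg.

Theorem mainTheorem2 (R : realType) (H : 'M[R[i]]_4) (lam : 'I_4 -> R[i])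
  (hH : hermitian_mx H) (htr : \tr H = 0)
  (hlam : char_poly H = Cpoly lam) (hdist : injective lam) :
  forall t : R,
    let F := F4 lam in
    let D := fun n => cderive_n n F t in
    is_mexp (('i * t%:C) *: H)
      (D 0%N *: H ^+ 3 - ('i * D 1%N) *: H ^+ 2
       - ((\tr (H ^+ 2) / 2%:R) * D 0%N + D 2%N) *: H
       + (- (\tr (H ^+ 3) / 3%:R) * D 0%N + 'i * (\tr (H ^+ 2) / 2%:R) * D 1%N
          + 'i * D 3%N) *: 1%:M).
Proof.
move=> t F D.
pose mu k := Re (lam k).
have hl k : lam k = (mu k)%:C.
  exact: (real_eig R H hH _ _ (vH R H lam k) (v_neq0 R H lam hlam k)).
have Fe : F = fun s => \sum_k (dd R lam k)^-1 * ee R (mu k) s.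
  apply/funext => s; rewrite /F /F4; apply: eq_bigr => k _.
  rewrite Cpoly_deriv mulrC; congr (_ * _); rewrite /cexp /ee hl /=.
  have e1 : (0 * mu k - 1 * 0 : R) = 0 by ring.
  have e2 : (0 * 0 + 1 * mu k : R) = mu k by ring.
  rewrite e1 e2 !mul0r mulr0 subr0 !add0r expR0 mul1r.
  done.
have De n : D n = \sum_k ((dd R lam k)^-1 * ('i * (mu k)%:C) ^+ n) * ee R (mu k) t.
  rewrite /D /cderive_n Fe.
  have [-> ->] := derivn_sum R 4 (fun k => (dd R lam k)^-1) mu n.
  by case: (\sum_k _).
pose c m := (dd R lam m)^-1 * ee R (mu m) t.
have Dc n : D n = \sum_m c m * ('i * lam m) ^+ n.
  rewrite De /c; apply: eq_bigr => m _; rewrite hl; ring.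
have hs : \sum_m lam m = 0.
  have := trX R H lam hlam hdist 1; rewrite expr1 htr => E.
  by rewrite [RHS]E; apply: eq_bigr => m _; rewrite expr1.
set RHS := (X in is_mexp _ X).
have Ediag : RHS = invmx (V R H lam) *m diag_mx (\row_k ee R (mu k) t) *m V R H lam.
  apply: (diagonalize R H lam hlam hdist) => k.
  rewrite /RHS vpoly; congr (_ *: _).
  rewrite !(trX R H lam hlam hdist) !Dc.
  have := scal R lam c k hs; rewrite /= => ->.
  by rewrite /c mulrAC mulVf ?mul1r // (dd_neq0 R lam hdist k).
rewrite Ediag => i j; rewrite conj_entry.
have -> : (fun k => ((('i * t%:C) *: H) ^+ k) i j / k`!%:R) = fun k =>
   \sum_m (invmx (V R H lam) i m * V R H lam m j) *
          (cos_coeff (mu m * t) k +i* sin_coeff (mu m * t) k).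
  apply/funext => k.
  rewrite exprZn mxE (diagonalize R H lam hlam hdist (H ^+ k) (fun m => lam m ^+ k) (vX R H lam ^~ k)) conj_entry.
  rewrite mulr_sumr mulr_suml; apply: eq_bigr => m _.
  rewrite -iXdiv hl rmorphM /= !exprMn.
  ring.
exact: (csum_sum R 4 (fun m => invmx (V R H lam) i m * V R H lam m j) (fun m => mu m * t)).
Qed.
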